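(* Let $3 \leq m < n$ be integers, let $p_k$ denote the $k$-th prime (with $p_1=2$), and let $O_k = \frac{p_k^2-1}{6}$. Then \[ O_n \not\equiv O_m \pmod{5 \cdot 7 \cdot 11 \cdots p_m}, \] where the modulus $5 \cdot 7 \cdots p_m = \prod_{i=3}^{m} p_i$ is the product of all primes from $5$ up to $p_m$. *)

(* Defs.v *)
From mathcomp Require Import all_boot.
Set Implicit Arguments. Unset Strict Implicit. Unset Printing Implicit Defensive.

Lemma next_prime_ex (m : nat) : exists p, (m < p) && prime p.
Proof. case: (prime_above m) => p Hmp Hp; exists p; by rewrite Hmp Hp. Qed.

Definition next_prime (m : nat) : nat := ex_minn (next_prime_ex m).

(* nth_prime k = p_k, the k-th prime, 1-indexed: p_1 = 2, p_2 = 3, p_3 = 5, ...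
   (nth_prime 0 is a junk value equal to 2 as well). *)
Fixpoint nth_prime (k : nat) : nat :=
  match k with
  | 0 | 1 => 2
  | k'.+1 => next_prime (nth_prime k')
  end.

(* O_k = (p_k^2 - 1)/6 (exact division for k >= 3). *)
Definition O (k : nat) : nat := ((nth_prime k) ^ 2 - 1) %/ 6.

Definition primorial_from5 (m : nat) : nat := \prod_(3 <= i < m.+1) nth_prime i.

(* Main.v *)
Require Import Defs.
From mathcomp Require Import all_boot.
From mathcomp Require Import zify.

Lemma np_spec k : 0 < k -> (nth_prime k < nth_prime k.+1) && prime (nth_prime k.+1).
Proof.
case: k => // k _.
change (nth_prime k.+2) with (next_prime (nth_prime k.+1)).
rewrite /next_prime. by case: ex_minnP.
Qed.

Lemma np_prime k : prime (nth_prime k).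
Proof.
case: k => [|k] //. case: k => [|k] //.
by case/andP: (@np_spec k.+1 erefl).
Qed.

Lemma np_mono m n : 0 < m -> m < n -> nth_prime m < nth_prime n.
Proof.
move=> Hm; elim: n => // n IH; rewrite ltnS leq_eqVlt => /orP [/eqP<-|Hlt].
  by case/andP: (np_spec _ Hm).
apply: ltn_trans (IH Hlt) _. have : 0 < n by lia.
by move/np_spec/andP => [].
Qed.

Lemma six_dvd p : prime p -> 5 <= p -> 6 %| p ^ 2 - 1.
Proof.
move=> Pp H5.
have h2 : ~~ (2 %| p).
  apply/negP => /(prime_nt_dvdP Pp) h. have := h erefl. lia.
have h3 : ~~ (3 %| p).
  apply/negP => /(prime_nt_dvdP Pp) h. have := h erefl. lia.
rewrite (divn_eq p 6) in h2 h3 *.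
move: (ltn_pmod p (isT : 0 < 6)).
move: (p %/ 6) (p %% 6) h2 h3 => q r.
case: r => [|[|[|[|[|[|r]]]]]] // h2 h3 _.
- by rewrite dvdn_addr ?dvdn_mull in h2.
- apply/dvdnP; exists (6*q*q + 2*q); rewrite expnS expn1; lia.
- by rewrite dvdn_addr ?dvdn_mull in h2.
- by rewrite dvdn_addr ?dvdn_mull in h3.
- by rewrite dvdn_addr ?dvdn_mull in h2.
- apply/dvdnP; exists (6*q*q + 10*q + 4); rewrite expnS expn1; lia.
Qed.

Lemma np_ge5 k : 3 <= k -> 5 <= nth_prime k.
Proof.
move=> Hk.
have h1 : 2 < nth_prime 2 by case/andP: (@np_spec 1 erefl).
have h2 : nth_prime 2 < nth_prime k by apply: np_mono.
have P := np_prime k.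
have : nth_prime k != 4 by apply/eqP => E; rewrite E in P.
lia.
Qed.

Theorem theorem4 (m n : nat) (H3m : 3 <= m) (Hmn : m < n) :
  O n != O m %[mod primorial_from5 m].
Proof.
apply/negP => /eqP E.
have Hd : nth_prime m %| primorial_from5 m.
  by rewrite /primorial_from5 big_nat_recr //= dvdn_mull.
have E2 : O n = O m %[mod nth_prime m].
  by rewrite -(modn_dvdm _ Hd) E modn_dvdm.
have E3 : O n * 6 = O m * 6 %[mod nth_prime m] by rewrite -modnMml E2 modnMml.
have Hmn' := np_mono _ _ (leq_trans (isT : 0 < 3) H3m) Hmn.
have Hn5 : 5 <= nth_prime n by apply: np_ge5; exact: leq_trans H3m (ltnW Hmn).
have Hm5 : 5 <= nth_prime m by apply: np_ge5.
rewrite /O (divnK (six_dvd _ (np_prime n) Hn5)) (divnK (six_dvd _ (np_prime m) Hm5)) in E3.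
have E4 : nth_prime n ^ 2 = nth_prime m ^ 2 %[mod nth_prime m].
  have p1 : 0 < nth_prime n ^ 2 by rewrite expn_gt0 prime_gt0 ?np_prime.
  have p2 : 0 < nth_prime m ^ 2 by rewrite expn_gt0 prime_gt0 ?np_prime.
  by rewrite -(subnK p1) -(subnK p2) -modnDml E3 modnDml.
have : nth_prime m %| nth_prime n ^ 2.
  by rewrite /dvdn E4 expnS expn1 modnMr.
rewrite (Euclid_dvdX _ _ (np_prime m)) => /andP [] + _.
rewrite (dvdn_prime2 (np_prime m) (np_prime n)) => /eqP h.
by rewrite h ltnn in Hmn'.
Qed.
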